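(* In the certification market, the welfare-optimal menu of certificates offers every threshold certification level $q\in(0,1]$ at transfer $c$ and level $0$ at transfer $0$; i.e., this menu maximizes $\operatorname{Wel}(M)$ over all menus $M$.
   Context: Certification market: producers with types $\psi$ (atomless distribution $G$, compact support), consumers with types $\phi$ (atomless distribution $F$, compact support), quality $q\in[0,1]$; cost $g(q;\psi)$ weakly convex non-decreasing in $q$, $g(0;\psi)=0$; value $f(q;\phi)$ weakly concave non-decreasing in $q$, $f(0;\phi)=0$, $0\le f\le1$; strict single-crossing: for $\phi_1<\phi_2$, $q_1<q_2$: $f(q_2;\phi_2)-f(q_1;\phi_2)>f(q_2;\phi_1)-f(q_1;\phi_1)$, and for $\psi_1<\psi_2$, $q_1<q_2$: $g(q_2;\psi_2)-g(q_1;\psi_2)<g(q_2;\psi_1)-g(q_1;\psi_1)$. Quality is unobservable to consumers except through certificates. The certifier offers a menu $M=\{(q_i,t_i)\}$ of threshold certificates $[q_i,1]$ with transfers $t_i$ (always including $(0,0)$) and incurs a verification cost $c\ge0$ for each non-trivial certificate issued; a producer choosing threshold $q_i$ produces at quality $q_i$. Producers choose certificates in equilibrium and trade with consumers in a competitive (Walrasian) market equilibrium; in equilibrium, producer $\psi$ trades with consumer $\phi(\psi)$ defined by $F(\phi(\psi))=G(\psi)$ and picks the menu item maximizing $f(q_i;\phi(\psi))-g(q_i;\psi)-t_i$. $\operatorname{Wel}(M)$ is the sum of utilities of consumers, producers and the certifier (the certifier's utility being transfers received minus verification costs) in the equilibrium outcome under $M$; transfers cancel, so $\operatorname{Wel}(M)=\int[f(q(\psi);\phi(\psi))-g(q(\psi);\psi)-c\cdot\mathbf{1}\{q(\psi)>0\}]\,dG(\psi)$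 where $q(\psi)$ is the level chosen by $\psi$. *)

(* Defs.v *)
From HB Require Import structures.
From mathcomp Require Import all_boot all_order all_algebra.
From mathcomp Require Import all_classical all_reals all_analysis.
Set Implicit Arguments. Unset Strict Implicit. Unset Printing Implicit Defensive.
Import Order.TTheory GRing.Theory Num.Theory.
Import numFieldNormedType.Exports.
Local Open Scope classical_set_scope.
Local Open Scope ring_scope.

Section Certification.
Variable R : realType.

Definition qint : set R := `[0, 1].

Definition atomless (P : probability R R) : Prop :=
  forall x : R, P [set x] = 0%E.

Definition compact_support (P : probability R R) : Prop :=
  exists a b : R, P `[a, b]%classic = 1%E.

Definition distr_fun (P : probability R R) (x : R) : \bar R := P `]-oo, x]%classic.

Definition convex_on01 (h : R -> R) : Prop :=
  forall x y t, x \in `[0, 1] -> y \in `[0, 1] -> t \in `[0, 1] ->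
    h (t * x + (1 - t) * y) <= t * h x + (1 - t) * h y.

Definition concave_on01 (h : R -> R) : Prop :=
  forall x y t, x \in `[0, 1] -> y \in `[0, 1] -> t \in `[0, 1] ->
    t * h x + (1 - t) * h y <= h (t * x + (1 - t) * y).

Definition nondecr_on01 (h : R -> R) : Prop :=
  forall x y, x \in `[0, 1] -> y \in `[0, 1] -> x <= y -> h x <= h y.

Definition cost_ok (g : R -> R -> R) : Prop :=
  (forall psi, convex_on01 (g ^~ psi)) /\
  (forall psi, nondecr_on01 (g ^~ psi)) /\
  (forall psi, g 0 psi = 0) /\
  (forall psi1 psi2 q1 q2, psi1 < psi2 -> q1 \in `[0, 1] -> q2 \in `[0, 1] ->
     q1 < q2 -> g q2 psi2 - g q1 psi2 < g q2 psi1 - g q1 psi1).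

Definition value_ok (f : R -> R -> R) : Prop :=
  (forall phi, concave_on01 (f ^~ phi)) /\
  (forall phi, nondecr_on01 (f ^~ phi)) /\
  (forall phi, f 0 phi = 0) /\
  (forall phi q, q \in `[0, 1] -> 0 <= f q phi <= 1) /\
  (forall phi1 phi2 q1 q2, phi1 < phi2 -> q1 \in `[0, 1] -> q2 \in `[0, 1] ->
     q1 < q2 -> f q2 phi2 - f q1 phi2 > f q2 phi1 - f q1 phi1).

Definition menu (M : set (R * R)) : Prop :=
  M (0, 0) /\ forall m, M m -> m.1 \in `[0, 1].

Definition Mstar (c : R) : set (R * R) :=
  [set m | (m.1 = 0 /\ m.2 = 0) \/ ((0 < m.1 <= 1) /\ m.2 = c)].

Definition item_util (f g : R -> R -> R) (phi : R -> R) (psi : R) (m : R * R) : R :=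
  f m.1 (phi psi) - g m.1 psi - m.2.

Definition equilibrium (G : probability R R) (f g : R -> R -> R) (phi : R -> R)
    (M : set (R * R)) (s : R -> R * R) : Prop :=
  {ae G, forall psi, M (s psi) /\
     forall m, M m -> item_util f g phi psi m <= item_util f g phi psi (s psi)}.

Definition wel_integrand (f g : R -> R -> R) (phi : R -> R) (c : R)
    (s : R -> R * R) (psi : R) : R :=
  f (s psi).1 (phi psi) - g (s psi).1 psi - c * (if (s psi).1 > 0 then 1 else 0).

(* Wel = integral over G of the welfare integrand (transfers cancel). *)
Definition Wel (G : probability R R) (f g : R -> R -> R) (phi : R -> R) (c : R)
    (s : R -> R * R) : \bar R :=
  (\int[G]_(psi in setT) (wel_integrand f g phi c s psi)%:E)%E.

End Certification.

(* Main.v *)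
Require Import Defs.
From HB Require Import structures.
From mathcomp Require Import all_boot all_order all_algebra.
From mathcomp Require Import all_classical all_reals all_analysis measurable_realfun.
Import Order.TTheory GRing.Theory Num.Theory.
Local Open Scope classical_set_scope.
Local Open Scope ring_scope.

Lemma pointwise (R : realType) (f g : R -> R -> R) (c : R) (phi : R -> R)
  (M : set (R * R)) (s sstar : R -> R * R) psi :
  value_ok f -> cost_ok g -> menu M -> M (s psi) ->
  Mstar c (sstar psi) ->
  (forall m, Mstar c m -> item_util f g phi psi m <= item_util f g phi psi (sstar psi)) ->
  0 <= wel_integrand f g phi c sstar psi /\
  wel_integrand f g phi c s psi <= wel_integrand f g phi c sstar psi.
Proof.
move=> [_ [_ [f0 _]]] [_ [_ [g0 _]]] [M00 Mq] Ms Mss mx.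
have E : wel_integrand f g phi c sstar psi = item_util f g phi psi (sstar psi).
  rewrite /wel_integrand /item_util.
  move: Mss; rewrite /Mstar /= => -[[-> ->]|[/andP[q0 _] ->]].
    by rewrite ltxx mulr0.
  by rewrite q0 mulr1.
have H0 : 0 <= wel_integrand f g phi c sstar psi.
  rewrite E; have := mx (0,0) (or_introl (conj erefl erefl)).
  by rewrite /item_util /= f0 g0 !subr0.
split => //.
have := Mq _ Ms; rewrite in_itv /= => /andP[q0 q1].
rewrite E; rewrite E in H0; rewrite /wel_integrand; case: ifPn => qp.
  rewrite mulr1; have := mx ((s psi).1, c).
  rewrite /item_util /=; apply; right; split => //; exact/andP.
have -> : (s psi).1 = 0 by apply/eqP; rewrite eq_le q0 andbT leNgt.
by rewrite f0 g0 !subr0 mulr0 subr0.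
Qed.


Theorem theorem2 (R : realType) (G F : probability R R)
    (f g : R -> R -> R) (c : R) (phi : R -> R) :
  atomless G -> compact_support G ->
  atomless F -> compact_support F ->
  value_ok f -> cost_ok g -> 0 <= c ->
  (forall psi, distr_fun F (phi psi) = distr_fun G psi) ->
  forall (M : set (R * R)) (s sstar : R -> R * R),
    menu M ->
    equilibrium G f g phi M s ->
    equilibrium G f g phi (Mstar c) sstar ->
    measurable_fun setT (wel_integrand f g phi c s) ->
    measurable_fun setT (wel_integrand f g phi c sstar) ->
    (Wel G f g phi c s <= Wel G f g phi c sstar)%E.
Proof.
move=> _ _ _ _ fok gok _ _ M s sstar Mok eqs eqss ms mss.
set u := fun x => (wel_integrand f g phi c s x)%:E.
set v := fun x => (wel_integrand f g phi c sstar x)%:E.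
have mu : measurable_fun [set: R] (EFin \o wel_integrand f g phi c s) by apply/measurable_EFinP.
have mv : measurable_fun [set: R] (EFin \o wel_integrand f g phi c sstar) by apply/measurable_EFinP.
have Hae : {ae G, forall x, (0 <= v x)%E /\ (u x <= v x)%E}.
  apply: filterS2 eqs eqss => x [Ms _] [Mss mx].
  have [h1 h2] := @pointwise _ _ _ c phi _ _ _ _ fok gok Mok Ms Mss mx.
  by rewrite /u /v !lee_fin.
rewrite /Wel -/u -/v (integralE _ _ u) (integralE _ _ v).
have vneg : (\int[G]_(x in setT) v^\- x = 0)%E.
  apply/eqP; rewrite eq_le integral_ge0 // andbT.
  rewrite -(integral0 G setT).
  apply: ae_ge0_le_integral => //.
  - exact: measurable_funeneg.
  - apply: filterS Hae => x [h0 _] _.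
    by rewrite funenegE /= ge_max lexx andbT lee_fin oppr_le0 -lee_fin.
rewrite vneg sube0.
apply: (@le_trans _ _ (\int[G]_(x in setT) u^\+ x)%E).
  rewrite -[leRHS]adde0; apply: leeD2l; rewrite oppe_le0; exact: integral_ge0.

apply: ae_ge0_le_integral => //.
- exact: measurable_funepos.
- exact: measurable_funepos.
- apply: filterS Hae => x [_ h] _.
  by rewrite !funeposE /= ge_max !le_max h lexx !orbT.
Qed.
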